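(* Let $G$ be a graph and $\mathcal H,\mathcal K$ families of subgraphs of $G$, each member inducing a connected subgraph of $G$. If $G$ has a tree decomposition that is $\mathcal K$-easy and $k$-sparse with respect to $\mathcal H$, then $(G,\mathcal H,\mathcal K)$ admits an intersection support of treewidth at most $k$.
   Context: A subgraph $H$ of $G$ is identified with its vertex set $V(H)$. For $K\in\mathcal K$, $\mathcal H_K=\{H\in\mathcal H: V(H)\cap V(K)\ne\emptyset\}$. An intersection support for $(G,\mathcal H,\mathcal K)$ is a graph $\tilde Q$ with vertex set $\mathcal H$ such that $\tilde Q[\mathcal H_K]$ is connected for every $K\in\mathcal K$. For a tree decomposition $(T,\{B_z\})$ of $G$ and an edge $\{x,y\}\in E(T)$, the adhesion set is $A_{xy}=B_x\cap B_y$. The tree decomposition is $\mathcal K$-easy if for every $K\in\mathcal K$ and every adhesion set $A$ with $A\cap V(K)\ne\emptyset$ there is $H\in\mathcal H_K$ with $V(H)\cap V(K)\cap A\ne\emptyset$. It is $k$-sparse with respect to $\mathcal H$ if every bag intersects at most $k$ members of $\mathcal H$. *)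

(* Defs.v *)
From mathcomp Require Import all_boot.
Set Implicit Arguments. Unset Strict Implicit. Unset Printing Implicit Defensive.

Definition simple_graph (V : finType) (e : rel V) : Prop :=
  symmetric e /\ irreflexive e.

(* A vertex set A induces a connected subgraph: any two vertices of A are
   joined by a path all of whose vertices lie in A (vacuous for A empty). *)
Definition induced_connected (V : finType) (e : rel V) (A : {set V}) : Prop :=
  forall x y, x \in A -> y \in A ->
    connect (fun a b => [&& a \in A, b \in A & e a b]) x y.

(* A tree: nonempty, connected, and with exactly #|Z| - 1 (undirected) edges;
   ordered pairs (x,y) with eT x y are counted, hence the factor 2. *)
Definition is_tree (Z : finType) (eT : rel Z) : Prop :=
  [/\ simple_graph eT, 0 < #|Z|, induced_connected eT [set: Z] &
      #|[set p : Z * Z | eT p.1 p.2]| = 2 * (#|Z| - 1)].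

Definition tree_decomposition (V : finType) (e : rel V)
  (Z : finType) (eT : rel Z) (B : Z -> {set V}) : Prop :=
  [/\ is_tree eT,
      (forall v : V, exists z, v \in B z),
      (forall u v : V, e u v -> exists z, (u \in B z) && (v \in B z)) &
      (forall v : V, induced_connected eT [set z | v \in B z])].

Definition treewidth_le (V : finType) (e : rel V) (k : nat) : Prop :=
  exists (Z : finType) (eT : rel Z) (B : Z -> {set V}),
    tree_decomposition e eT B /\ forall z, #|B z| <= k.+1.

Definition H_of (V : finType) (I : finType) (Hf : I -> {set V}) (K : {set V})
  : {set I} := [set i | Hf i :&: K != set0].

Definition intersection_support (V I J : finType) (Hf : I -> {set V})
  (Kf : J -> {set V}) (Q : rel I) : Prop :=
  simple_graph Q /\ forall j : J, induced_connected Q (H_of Hf (Kf j)).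

Definition K_easy (V I J Z : finType) (Hf : I -> {set V}) (Kf : J -> {set V})
  (eT : rel Z) (B : Z -> {set V}) : Prop :=
  forall (j : J) (x y : Z), eT x y ->
    Kf j :&: (B x :&: B y) != set0 ->
    exists i : I, Hf i :&: Kf j :&: (B x :&: B y) != set0.

Definition k_sparse (V I Z : finType) (Hf : I -> {set V})
  (B : Z -> {set V}) (k : nat) : Prop :=
  forall z : Z, #|[set i | Hf i :&: B z != set0]| <= k.

(* Main.v *)
Require Import Defs.
From mathcomp Require Import all_boot.
From mathcomp Require Import zify.
Set Implicit Arguments. Unset Strict Implicit. Unset Printing Implicit Defensive.

Lemma connect_ind' (T : finType) (r : rel T) (P : T -> Prop) x y :
  connect r x y -> P x -> (forall a b, r a b -> P a -> P b) -> P y.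
Proof.
move=> /connectP [p pth ->] Px step.
elim: p x pth Px => [|a p IH] x //= /andP [rxa pth] Px.
apply: (IH a pth). exact: step rxa Px.
Qed.

Lemma bag_prop (V Z : finType) (e : rel V) (eT : rel Z) (B : Z -> {set V})
  (W : Z -> Prop) (S : {set V}) :
  tree_decomposition e eT B -> induced_connected e S ->
  (forall v x y, v \in S -> eT x y -> v \in B x -> v \in B y -> W x -> W y) ->
  forall u z z' w, u \in S -> u \in B z -> W z -> w \in S -> w \in B z' -> W z'.
Proof.
move=> [_ _ cov vcon] Scon hyp u z z' w uS uz Wz wS wz'.
have step1 : forall v x y, v \in S -> v \in B x -> v \in B y -> W x -> W y.
  move=> v x y vS vx vy Wx.
  have := vcon v x y; rewrite !inE => /(_ vx vy) C.
  apply: (connect_ind' C Wx) => a b /and3P [ha hb hab].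
  rewrite !inE in ha hb. exact: hyp vS hab ha hb.
have := Scon u w uS wS => C.
pose P := fun v => v \in S -> forall x, v \in B x -> W x.
suff : P w by apply.
apply: (connect_ind' C).
  move=> _ x ux. exact: step1 uS uz ux Wz.
move=> a b /and3P [ha hb hab] Pa _ x bx.
have [zz /andP [az bz]] := cov a b hab.
exact: step1 hb bz bx (Pa ha zz az).
Qed.


Definition Qrel (V I Z : finType) (Hf : I -> {set V}) (B : Z -> {set V}) : rel I :=
  fun i j => (i != j) && [exists z, (Hf i :&: B z != set0) && (Hf j :&: B z != set0)].

Lemma Qrel_simple (V I Z : finType) (Hf : I -> {set V}) (B : Z -> {set V}) :
  simple_graph (Qrel Hf B).
Proof.
split.
  move=> i j; rewrite /Qrel eq_sym; congr andb.
  apply/existsP/existsP => -[z /andP [a b]]; exists z; by rewrite a b.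
by move=> i; rewrite /Qrel eqxx.
Qed.

Lemma Qrel_conn (V I J Z : finType) (e : rel V) (Hf : I -> {set V}) (Kf : J -> {set V})
  (eT : rel Z) (B : Z -> {set V}) :
  tree_decomposition e eT B -> K_easy Hf Kf eT B ->
  (forall j, induced_connected e (Kf j)) ->
  forall j, induced_connected (Qrel Hf B) (H_of Hf (Kf j)).
Proof.
move=> td easy Kcon j i0 i1 i0K i1K.
pose R := fun a b => [&& a \in (H_of Hf (Kf j)), b \in (H_of Hf (Kf j)) & Qrel Hf B a b].
change (connect R i0 i1).
have i1K' := i1K.
rewrite /H_of inE in i0K. rewrite /H_of inE in i1K'.
move: i0K => /set0Pn [u0]; rewrite !inE => /andP [u0H u0K].
move: i1K' => /set0Pn [u1]; rewrite !inE => /andP [u1H u1K].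
have [_ cov _ _] := td.
have [z0 z0u] : exists z, u0 \in B z by case: td => _ c _ _; apply: c.
have [z1 z1u] : exists z, u1 \in B z by case: td => _ c _ _; apply: c.
pose W := fun z => forall i, i \in (H_of Hf (Kf j)) -> Hf i :&: B z != set0 -> connect R i0 i.
have close : forall z i', i' \in (H_of Hf (Kf j)) -> Hf i' :&: B z != set0 -> connect R i0 i' -> W z.
  move=> z i' i'K i'z C i iK iz.
  case: (eqVneq i' i) => [<- //|ne].
  apply: (connect_trans C); apply: connect1.
  rewrite /R i'K iK /Qrel ne /=. by apply/existsP; exists z; rewrite i'z iz.
have i0HK : i0 \in (H_of Hf (Kf j)) by rewrite /H_of inE; apply/set0Pn; exists u0; rewrite !inE u0H u0K.
have : W z1.
  apply: (bag_prop (W:=W) td (Kcon j) _ u0K z0u _ u1K z1u).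
    move=> v x y vK xy vx vy Wx.
    have ne : Kf j :&: (B x :&: B y) != set0 by apply/set0Pn; exists v; rewrite !inE vK vx vy.
    have [i' /set0Pn [w]] := easy j x y xy ne.
    rewrite !inE => /andP [/andP [wH wK] /andP [wx wy]].
    have i'K : i' \in (H_of Hf (Kf j)) by rewrite /H_of inE; apply/set0Pn; exists w; rewrite !inE wH wK.
    apply: (close y i' i'K); first by apply/set0Pn; exists w; rewrite !inE wH wy.
    by apply: Wx => //; apply/set0Pn; exists w; rewrite !inE wH wx.
  apply: (close z0 i0 i0HK) => //; by apply/set0Pn; exists u0; rewrite !inE u0H z0u.
apply => //. by apply/set0Pn; exists u1; rewrite !inE u1H z1u.
Qed.

Definition ext_rel (Z I : finType) (eT : rel Z) (z0 : Z) : rel (Z + I)%type :=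
  fun a b => match a, b with
  | inl x, inl y => eT x y
  | inl x, inr _ => x == z0
  | inr _, inl y => y == z0
  | inr _, inr _ => false end.

Lemma conn_setT (T : finType) (r : rel T) x y :
  connect r x y -> connect (fun a b => [&& a \in [set: T], b \in [set: T] & r a b]) x y.
Proof. by rewrite (@eq_connect _ _ r) // => a b; rewrite !in_setT. Qed.

Lemma conn_setT' (T : finType) (r : rel T) x y :
  connect (fun a b => [&& a \in [set: T], b \in [set: T] & r a b]) x y -> connect r x y.
Proof. by rewrite (@eq_connect _ _ r) // => a b; rewrite !in_setT. Qed.

Lemma ext_tree (Z I : finType) (eT : rel Z) (z0 : Z) :
  is_tree eT -> is_tree ((@ext_rel Z I eT z0)).
Proof.
move=> [[sym irr] cpos con card].
have sym' : symmetric ((@ext_rel Z I eT z0)) by move=> [x|i] [y|j] //=; apply: sym.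
split.
- split => //. by move=> [x|i] //=; apply: irr.
- by rewrite card_sum; lia.
- have L : forall x y, connect eT x y -> connect ((@ext_rel Z I eT z0)) (inl x) (inl y).
    move=> x y C. apply: (connect_ind' (P := fun c => connect (@ext_rel Z I eT z0) (inl x) (inl c)) C); first exact: connect0.
    move=> a b ab Ca.
    apply: (connect_trans Ca). exact: connect1.
  have H0 : forall c, connect ((@ext_rel Z I eT z0)) (inl z0) c.
    move=> [x|i]; first by apply: L; apply: conn_setT'; apply: con; rewrite in_setT.
    apply: connect1 => /=. exact: eqxx.
  move=> a b _ _; apply: conn_setT.
  apply: connect_trans (H0 b). by rewrite (sym_connect_sym sym'); apply: H0.
- pose f := fun p : Z * Z => (@inl Z I p.1, @inl Z I p.2).
  pose g := fun i : I => (@inl Z I z0, @inr Z I i).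
  pose h := fun i : I => (@inr Z I i, @inl Z I z0).
  have fi : injective f by move=> [a b] [c d] [-> ->].
  have gi : injective g by move=> a b [->].
  have hi : injective h by move=> a b [->].
  set E := [set p : Z * Z | eT p.1 p.2].
  have -> : [set p : (Z + I) * (Z + I) | (@ext_rel Z I eT z0) p.1 p.2] =
      f @: E :|: g @: setT :|: h @: setT.
    apply/setP => -[[x|i] [y|j]]; rewrite !inE /=.
    + rewrite -[(inl x, inl y)]/(f (x,y)) mem_imset // inE /=.
      case: (eT x y) => //=.
      by apply/esym/negbTE/orP => -[] /imsetP [?] _ [].
    + case: (eqVneq x z0) => [->|ne].
        by rewrite -[(inl z0, inr j)]/(g j) mem_imset // in_setT orbT.
      apply/esym/negbTE; apply/orP => -[/orP [] |] /imsetP [?] _ [] //.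
      by move=> E1; move: ne; rewrite E1 eqxx.
    + case: (eqVneq y z0) => [->|ne].
        by rewrite -[(inr i, inl z0)]/(h i) mem_imset // in_setT orbT.
      apply/esym/negbTE; apply/orP => -[/orP [] |] /imsetP [?] _ [] //.
      by move=> _ E1; move: ne; rewrite E1 eqxx.
    + by apply/esym/negbTE; apply/orP => -[/orP [] |] /imsetP [?] _ [].
  have D1 : f @: E :&: g @: setT = set0.
    apply/setP => q; rewrite !inE; apply/negbTE/andP => -[/imsetP [[a b] _ ->] /imsetP [c _]].
    by rewrite /f /g /= => -[].
  have D2 : (f @: E :|: g @: setT) :&: h @: setT = set0.
    apply/setP => q; rewrite !inE; apply/negbTE/andP => -[/orP [] /imsetP [a _ ->] /imsetP [c _]].
      by rewrite /f /h /= => -[].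
    by rewrite /g /h /= => -[].
  rewrite cardsU D2 cards0 subn0 cardsU D1 cards0 subn0 !card_imset // -/E card !cardsT card_sum.
  lia.
Qed.

Definition Bext (V I Z : finType) (Hf : I -> {set V}) (B : Z -> {set V})
  (a : (Z + I)%type) : {set I} :=
  match a with
  | inl z => [set i | Hf i :&: B z != set0]
  | inr i => if Hf i == set0 then [set i] else set0 end.

Theorem mainTheorem11 (V : finType) (e : rel V) (I J : finType)
  (Hf : I -> {set V}) (Kf : J -> {set V}) (k : nat) :
  simple_graph e ->
  (forall i, induced_connected e (Hf i)) ->
  (forall j, induced_connected e (Kf j)) ->
  (exists (Z : finType) (eT : rel Z) (B : Z -> {set V}),
     [/\ tree_decomposition e eT B, K_easy Hf Kf eT B & k_sparse Hf B k]) ->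
  exists Q : rel I, intersection_support Hf Kf Q /\ treewidth_le Q k.
Proof.
move=> _ Hcon Kcon [Z [eT [B [td easy sparse]]]].
have td' := td; case: td' => tr cov edg vcon.
have [z0 _] : exists z0 : Z, z0 \in Z by apply/card_gt0P; case: tr.
exists (Qrel Hf B); split.
  split; first exact: Qrel_simple.
  exact: Qrel_conn td easy Kcon.
exists (Z + I)%type, (@ext_rel Z I eT z0), (Bext Hf B); split; last first.
  move=> [z|i] /=.
    by apply: leqW; have := sparse z.
  by case: (Hf i == set0); rewrite ?cards1 ?cards0.
split.
- exact: ext_tree.
- move=> i; case: (eqVneq (Hf i) set0) => [E|ne].
    by exists (inr i); rewrite /= E eqxx inE.
  have [v vi] := set0Pn _ ne.
  have [z vz] := cov v.
  by exists (inl z); rewrite /= inE; apply/set0Pn; exists v; rewrite inE vi vz.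
- move=> i j /andP [_ /existsP [z /andP [a b]]].
  by exists (inl z); rewrite /= !inE a b.
- move=> i x y.
  case: (eqVneq (Hf i) set0) => [E|ne].
    have onlyr : forall c, c \in [set z' | i \in Bext Hf B z'] -> c = inr i.
      move=> [z|j]; rewrite !inE /=.
        by rewrite ?inE E set0I eqxx.
      case: (eqVneq (Hf j) set0) => _; last by rewrite ?inE.
      by rewrite ?inE => /eqP ->.
    by move=> /onlyr -> /onlyr ->; apply: connect0.
  have onlyl : forall c, c \in [set z' | i \in Bext Hf B z'] ->
      exists2 a, c = inl a & Hf i :&: B a != set0.
    move=> [z|j]; rewrite !inE /=.
      by rewrite ?inE => h; exists z.
    case: (eqVneq (Hf j) set0) => Ej; last by rewrite ?inE.
    by rewrite ?inE => /eqP eij; move: ne; rewrite eij Ej eqxx.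
  move=> /onlyl [a -> ha] /onlyl [b -> hb].
  have [u] := set0Pn _ ha; rewrite inE => /andP [ui ua].
  have [w] := set0Pn _ hb; rewrite inE => /andP [wi wb].
  pose S' := [set z' | i \in Bext Hf B z'].
  pose W := fun c => connect (fun p q => [&& p \in S', q \in S' & @ext_rel Z I eT z0 p q]) (inl a) (inl c).
  apply: (bag_prop (W := W) td (Hcon i) _ ui ua _ wi wb); last exact: connect0.
  move=> v c d vi cd vc vd Wc.
  apply: (connect_trans Wc); apply: connect1.
  rewrite /S' !inE /= cd andbT.
  by apply/andP; split; apply/set0Pn; exists v; rewrite inE vi ?vc ?vd.
Qed.
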